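(* Let $k\ge 3$, $n_1=\cdots=n_k\ge 2$, and let $G,G'\in\mathcal{O}(K_{n_1,\dots,n_k})$. Suppose that $G$ and $G'$ belong to the same one of the following three classes: (Case 1) $G=\Gamma(\text{complete};\ t_i=\mathrm{ss}\text{ for }i\in I,\ t_i=\mathrm{sc}\text{ for }i\notin I)$ for some $I\subseteq[k]$; (Case 2) $G=\Gamma(\text{star toward }j;\ t_j=\mathrm{sc},\ t_i=\mathrm{ss}\text{ for }i\in I,\ t_i=\mathrm{c}\text{ for }i\notin I\cup\{j\})$ for some $j\in[k]$ and $I\subseteq[k]\setminus\{j\}$; (Case 3) the same as Case 2 but with $t_j=\mathrm{c}$; and similarly $G'$ with index set $I'$ (and possibly a different index $j'$). If $|I|=|I'|$, then $G$ and $G'$ are isomorphic.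
   Context: $V=U_1\sqcup\cdots\sqcup U_k$, $|U_i|=n_i$; $K_{n_1,\dots,n_k}$ has edges exactly between different parts. The local complement $c_v(G)$ complements the edges among the neighbours of $v$; $\mathcal{O}(G)$ is the set of graphs on $V$ obtainable from $G$ by finite sequences of local complements. Graph family $\Gamma$: each $i$ gets a type $t_i\in\{\mathrm{c},\mathrm{sc},\mathrm{ss}\}$: $\mathrm{c}$: $U_i$ a clique, $R_i=U_i$; $\mathrm{sc}$: $U_i$ independent, $R_i=U_i$; $\mathrm{ss}$: a center $c_i\in U_i$ adjacent to all other vertices of $U_i$, no other internal edges, $R_i=\{c_i\}$. Central type ''complete'': for all $i\ne l$, all edges between $R_i$ and $R_l$; ''star toward $j$'': for each $i\ne j$ all edges between $R_i$ and $R_j$, and no other edges between different parts. (Every graph in $\mathcal{O}(K_{n_1,\dots,n_k})$ is of one of the three case forms.) *)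

(* Defs.v *)
From mathcomp Require Import all_boot fingroup perm.
Set Implicit Arguments. Unset Strict Implicit. Unset Printing Implicit Defensive.

(* Vertices of K_{n,...,n} with k parts: pairs (part index i : 'I_k, position : 'I_n).
   U_i = { x | x.1 = i }.  A graph is a set of ordered pairs (x,y) (the adjacency
   relation); graphs arising here are symmetric and irreflexive. *)
Definition vtx (k n : nat) := ('I_k * 'I_n)%type.
Definition graph (k n : nat) := {set (vtx k n * vtx k n)}.

Section Defs.
Variables k n : nat.
Local Notation V := (vtx k n).
Local Notation G_ := (graph k n).

Definition adj (G : G_) (x y : V) : bool := (x, y) \in G.

Definition Kmulti : G_ := [set p : V * V | p.1.1 != p.2.1].

Definition local_compl (G : G_) (v : V) : G_ :=
  [set p : V * V | if [&& p.1 != p.2, adj G v p.1 & adj G v p.2]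
                   then p \notin G else p \in G].

Inductive lc_orbit (G0 : G_) : G_ -> Prop :=
| orbit_refl : lc_orbit G0 G0
| orbit_step G v : lc_orbit G0 G -> lc_orbit G0 (local_compl G v).

Inductive ptype := Tc | Tsc | Tss.
Inductive ctype := Complete | StarToward of 'I_k.

(* t : type of each part; c : centre c_i (position in U_i), used when t_i = ss *)
Definition inR (t : 'I_k -> ptype) (c : 'I_k -> 'I_n) (x : V) : bool :=
  if t x.1 is Tss then x.2 == c x.1 else true.

Definition internal_edge (t : 'I_k -> ptype) (c : 'I_k -> 'I_n) (x y : V) : bool :=
  (x != y) &&
  match t x.1 with
  | Tc => true
  | Tsc => false
  | Tss => (x.2 == c x.1) || (y.2 == c x.1)
  end.

Definition cross_edge (ct : ctype) (t : 'I_k -> ptype) (c : 'I_k -> 'I_n) (x y : V) : bool :=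
  match ct with
  | Complete => inR t c x && inR t c y
  | StarToward j => [&& (x.1 == j) || (y.1 == j), inR t c x & inR t c y]
  end.

Definition Gamma (ct : ctype) (t : 'I_k -> ptype) (c : 'I_k -> 'I_n) : G_ :=
  [set p : V * V | if p.1.1 == p.2.1 then internal_edge t c p.1 p.2
                   else cross_edge ct t c p.1 p.2].

Definition case1 (G : G_) (I : {set 'I_k}) : Prop :=
  exists c, G = Gamma Complete (fun i => if i \in I then Tss else Tsc) c.

Definition case2 (G : G_) (j : 'I_k) (I : {set 'I_k}) : Prop :=
  j \notin I /\
  exists c, G = Gamma (StarToward j)
                  (fun i => if i == j then Tsc else if i \in I then Tss else Tc) c.

Definition case3 (G : G_) (j : 'I_k) (I : {set 'I_k}) : Prop :=
  j \notin I /\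
  exists c, G = Gamma (StarToward j)
                  (fun i => if i == j then Tc else if i \in I then Tss else Tc) c.

Definition isomorphic (G G' : G_) : Prop :=
  exists f : {perm V}, forall x y : V, adj G x y = adj G' (f x) (f y).

End Defs.

(* Main.v *)
Require Import Defs.
From mathcomp Require Import all_boot fingroup perm.

Lemma tperm_eqR (T : finType) (a b p : T) : (tperm a b p == b) = (p == a).
Proof. by rewrite -(inj_eq (@perm_inj _ (tperm a b)) p a) tpermL. Qed.

Lemma perm_swap_sets (T : finType) (m : nat) : forall (A B : {set T}),
  #|A :\: B| = m -> #|A| = #|B| ->
  exists s : {perm T}, (forall x, (s x \in B) = (x \in A)) /\
                       (forall x, x \notin A -> x \notin B -> s x = x).
Proof.
elim: m => [|m IH] A B hm hAB.
  have sub : A \subset B by rewrite -setD_eq0 -cards_eq0 hm.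
  have eAB : A = B by apply/eqP; rewrite eqEcard sub hAB leqnn.
  by exists 1%g; split=> x; rewrite perm1 // eAB.
have [a aAB] : exists a, a \in A :\: B.
  by apply/set0Pn; rewrite -cards_eq0 hm.
have hBA : #|B :\: A| = m.+1.
  move: (cardsD A B) (cardsD B A); rewrite setIC hm hAB => ->; done.
have [b bBA] : exists b, b \in B :\: A.
  by apply/set0Pn; rewrite -cards_eq0 hBA.
move: aAB bBA; rewrite !inE => /andP [anB aA] /andP [bnA bB].
have ab : a != b by apply/eqP=> e; move: anB; rewrite e bB.
set A' := b |: (A :\ a).
have hA' : #|A'| = #|B|.
  by rewrite cardsU1 !inE (negbTE bnA) andbF /= -hAB (cardsD1 a A) aA.
have hm' : #|A' :\: B| = m.
  have -> : A' :\: B = (A :\: B) :\ a.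
    apply/setP=> x; rewrite !inE; case: (x =P b) => [->|_] /=.
      by rewrite bB andbF.
    by case: (x \notin B); case: (x != a).
  by have := cardsD1 a (A :\: B); rewrite hm in_setD anB aA add1n => -[].
have [s' [hs1 hs2]] := IH A' B hm' hA'.
exists (tperm a b * s')%g; split=> x; rewrite permM.
  rewrite hs1 !inE; case: tpermP => [->|->|].
  - by rewrite eqxx aA.
  - by rewrite (negbTE ab) eqxx /= (negbTE bnA).
  - by move=> /eqP/negbTE -> /eqP/negbTE -> /=.
move=> xA xB.
have xa : x != a by apply/eqP=> e; move: xA; rewrite e aA.
have xb : x != b by apply/eqP=> e; move: xB; rewrite e bB.
rewrite tpermD 1?eq_sym //; apply: hs2 => //.
by rewrite !inE (negbTE xb) (negbTE xA) andbF.
Qed.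

Lemma perm_sets (T : finType) (A B : {set T}) : #|A| = #|B| ->
  exists s : {perm T}, (forall x, (s x \in B) = (x \in A)) /\
                       (forall x, x \notin A -> x \notin B -> s x = x).
Proof. exact: (@perm_swap_sets T _ A B erefl). Qed.

Lemma perm_sets2 (T : finType) (j j' : T) (I I' : {set T}) :
  j \notin I -> j' \notin I' -> #|I| = #|I'| ->
  exists s : {perm T}, s j = j' /\ forall x, (s x \in I') = (x \in I).
Proof.
move=> jI jI' hc.
set A := [set tperm j j' x | x in I].
have cA : #|A| = #|I'| by rewrite card_imset //; exact: perm_inj.
have [s [hs1 hs2]] := perm_sets _ _ _ cA.
have jA : j' \notin A.
  by rewrite -(tpermL j j') mem_imset //; exact: perm_inj.
exists (tperm j j' * s)%g; split.
  by rewrite permM tpermL hs2.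
by move=> x; rewrite permM hs1 mem_imset //; exact: perm_inj.
Qed.

Section Iso.
Variables k n : nat.

Lemma gamma_iso (ct ct' : ctype k) (t t' : 'I_k -> ptype) (c c' : 'I_k -> 'I_n)
  (s : {perm 'I_k}) :
  (forall i, t' (s i) = t i) ->
  (match ct with Complete => ct' = @Complete k | StarToward j => ct' = StarToward (s j) end) ->
  isomorphic (Gamma ct t c) (Gamma ct' t' c').
Proof.
move=> Ht Hct.
pose f (x : vtx k n) : vtx k n := (s x.1, tperm (c x.1) (c' (s x.1)) x.2).
have finj : injective f.
  move=> [i p] [i2 q] [] /perm_inj e; rewrite /= in e; subst i2.
  by move/perm_inj => ->.
have inRf : forall x, inR t' c' (f x) = inR t c x.
  move=> [i p]; rewrite /inR /= Ht; case: (t i) => //.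
  exact: tperm_eqR.
exists (perm finj) => x y; rewrite /adj !inE /= !permE /=.
case: x y => [i p] [i2 q] /=.
rewrite (inj_eq perm_inj); case: eqP => [<-|ne].
  rewrite /internal_edge /= Ht.
  have -> : ((s i, tperm (c i) (c' (s i)) p) != (s i, tperm (c i) (c' (s i)) q))
            = ((i, p) != (i, q)).
    by congr (~~ _); apply/eqP/eqP => [[/perm_inj ->]|[->]].
  by case: (t i) => //; rewrite !tperm_eqR.
case: ct Hct => [->|j ->] /=.
  by rewrite (inRf (i, p)) (inRf (i2, q)).
by rewrite !(inj_eq perm_inj) (inRf (i, p)) (inRf (i2, q)).
Qed.
End Iso.

Theorem lemma7 (k n : nat) (G G' : graph k n) :
  3 <= k -> 2 <= n ->
  lc_orbit (@Kmulti k n) G -> lc_orbit (@Kmulti k n) G' ->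
  (forall I I' : {set 'I_k},
      case1 G I -> case1 G' I' -> #|I| = #|I'| -> isomorphic G G') /\
  (forall (j j' : 'I_k) (I I' : {set 'I_k}),
      case2 G j I -> case2 G' j' I' -> #|I| = #|I'| -> isomorphic G G') /\
  (forall (j j' : 'I_k) (I I' : {set 'I_k}),
      case3 G j I -> case3 G' j' I' -> #|I| = #|I'| -> isomorphic G G').
Proof.
move=> _ _ _ _; split; last split.
- move=> I I' [c ->] [c' ->] hc.
  have [s [hs _]] := perm_sets _ _ _ hc.
  by apply: (@gamma_iso k n _ _ _ _ _ _ s) => // i; rewrite hs.
- move=> j j' I I' [jI [c ->]] [jI' [c' ->]] hc.
  have [s [hsj hs]] := perm_sets2 _ _ _ _ _ jI jI' hc.
  apply: (@gamma_iso k n _ _ _ _ _ _ s); last by rewrite hsj.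
  by move=> i; rewrite -hsj (inj_eq perm_inj) hs.
- move=> j j' I I' [jI [c ->]] [jI' [c' ->]] hc.
  have [s [hsj hs]] := perm_sets2 _ _ _ _ _ jI jI' hc.
  apply: (@gamma_iso k n _ _ _ _ _ _ s); last by rewrite hsj.
  by move=> i; rewrite -hsj (inj_eq perm_inj) hs.
Qed.
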